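(* Let $z\in\mathbb{C}$ and $0<b<1$, and assume that for all $t\in[b,1]$ we have $|1-tz|\le C$ for some constant $C<1$. Let $\theta = \arctan\left(\pi/|\log C|\right)$. If $m\ge 1$ is an integer with $m\theta\le\pi/2$, then the real part of $\log^m(1-tz)$ does not change sign for $t\in[b,1]$, and the imaginary part of $\log^m(1-tz)$ does not change sign for $t\in[b,1]$.
   Context: $\log$ denotes the principal branch of the complex logarithm. *)

(* Defs.v *)
From Stdlib Require Import Reals.
From Coquelicot Require Import Coquelicot.
Open Scope R_scope.

(* Principal argument Arg w in (-PI, PI] (the usual atan2 convention, Arg 0 = 0). *)
Definition Carg (w : Complex.C) : R :=
  let x := fst w in let y := snd w in
  if Rlt_dec 0 x then atan (y / x)
  else if Rlt_dec x 0 then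
    (if Rle_dec 0 y then atan (y / x) + PI else atan (y / x) - PI)
  else (if Rlt_dec 0 y then PI / 2
        else if Rlt_dec y 0 then - (PI / 2) else 0).

Definition Clog (w : Complex.C) : Complex.C := (ln (Cmod w), Carg w).

Fixpoint Cpown (w : Complex.C) (m : nat) : Complex.C :=
  match m with
  | O => RtoC 1
  | S k => Cmult w (Cpown w k)
  end.

(* Main.v *)
Require Import Defs.
From Stdlib Require Import Reals Lra Lia.
From Coquelicot Require Import Coquelicot.
Open Scope R_scope.

Lemma atan_le' x y : x <= y -> atan x <= atan y.
Proof. intros H; destruct (Req_dec x y) as [->|N]; [lra|].
  left; apply atan_increasing; lra. Qed.

Lemma Cpown_polar (r p : R) (m : nat) :
  Cpown (r * cos p, r * sin p) m = (r ^ m * cos (INR m * p), r ^ m * sin (INR m * p)).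
Proof.
  induction m as [|k IH].
  - simpl. rewrite Rmult_0_l, cos_0, sin_0. unfold RtoC. f_equal; ring.
  - change (Cpown (r * cos p, r * sin p) (S k)) with
      (Cmult (r * cos p, r * sin p) (Cpown (r * cos p, r * sin p) k)).
    rewrite IH, S_INR. unfold Cmult; simpl.
    replace ((INR k + 1) * p) with (p + INR k * p) by ring.
    rewrite cos_plus, sin_plus. f_equal; ring.
Qed.

Lemma key (L A c : R) (m : nat) : 0 < c -> L <= - c -> Rabs A <= PI ->
  INR m * atan (PI / c) <= PI / 2 ->
  0 <= (-1) ^ m * fst (Cpown (L, A) m) /\
  (0 <= A -> (-1) ^ m * snd (Cpown (L, A) m) <= 0) /\
  (A <= 0 -> 0 <= (-1) ^ m * snd (Cpown (L, A) m)).
Proof.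
  intros hc hL hA hm.
  remember (- L) as a eqn:Ha.
  assert (ha : 0 < a) by lra.
  set (p := atan (- A / a)).
  assert (hAa : - (PI / c) <= - A / a <= PI / c).
  { apply Rabs_le_between. unfold Rdiv. rewrite Rabs_mult, Rabs_Ropp.
    rewrite (Rabs_right (/ a)) by (left; apply Rinv_0_lt_compat; lra).
    apply Rle_trans with (PI * / a).
    - apply Rmult_le_compat_r; [left; apply Rinv_0_lt_compat; lra| exact hA].
    - apply Rmult_le_compat_l; [left; apply PI_RGT_0|]. apply Rinv_le_contravar; lra. }
  assert (hp : - atan (PI / c) <= p <= atan (PI / c)).
  { unfold p; rewrite <- atan_opp; split; apply atan_le'; lra. }
  assert (hm0 : 0 <= INR m) by apply pos_INR.
  assert (hmp : - (PI / 2) <= INR m * p <= PI / 2).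
  { split.
    - apply Rle_trans with (- (INR m * atan (PI / c))); [lra|].
      rewrite Ropp_mult_distr_r. apply Rmult_le_compat_l; lra.
    - apply Rle_trans with (INR m * atan (PI / c)); [|lra].
      apply Rmult_le_compat_l; lra. }
  assert (hcos : 0 < cos p).
  { destruct (atan_bound (- A / a)); apply cos_gt_0; unfold p; lra. }
  set (r := L / cos p).
  assert (eq : (L, A) = (r * cos p, r * sin p)).
  { unfold r. f_equal.
    - field; lra.
    - assert (ht : tan p = - A / a) by (unfold p; apply tan_atan).
      unfold tan in ht. replace (sin p) with (- A / a * cos p) by (rewrite <- ht; field; lra).
      rewrite Ha. field. split; lra. }
  rewrite eq, Cpown_polar; simpl.
  assert (hr : 0 < - r).
  { unfold r. unfold Rdiv. rewrite Ropp_mult_distr_l. apply Rmult_lt_0_compat; [lra|].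
    apply Rinv_0_lt_compat; lra. }
  assert (hrm : 0 < (- r) ^ m) by (apply pow_lt; lra).
  assert (E : forall x, (-1) ^ m * (r ^ m * x) = (- r) ^ m * x).
  { intros x. replace (- r) with (-1 * r) by ring. rewrite Rpow_mult_distr. ring. }
  rewrite !E. split; [|split].
  - apply Rmult_le_pos; [lra|]. apply cos_ge_0; lra.
  - intros hA0. assert (p <= 0).
    { unfold p. rewrite <- atan_0. apply atan_le'.
      unfold Rdiv. apply Rmult_le_0_r; [lra|]. left; apply Rinv_0_lt_compat; lra. }
    assert (0 <= sin (- (INR m * p))) by (apply sin_ge_0; nra).
    rewrite sin_neg in H0. nra.
  - intros hA0. assert (0 <= p).
    { unfold p. rewrite <- atan_0. apply atan_le'.
      unfold Rdiv. apply Rmult_le_pos; [lra|]. left; apply Rinv_0_lt_compat; lra. }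
    assert (0 <= sin (INR m * p)) by (apply sin_ge_0; nra).
    nra.
Qed.

Lemma atan_nonneg x : 0 <= x -> 0 <= atan x.
Proof. intros; rewrite <- atan_0; apply atan_le'; lra. Qed.
Lemma atan_nonpos x : x <= 0 -> atan x <= 0.
Proof. intros; rewrite <- atan_0; apply atan_le'; lra. Qed.

Lemma div_sign (x y : R) : (0 < x -> 0 <= y -> 0 <= y / x) /\ (0 < x -> y <= 0 -> y / x <= 0)
  /\ (x < 0 -> 0 <= y -> y / x <= 0) /\ (x < 0 -> y <= 0 -> 0 <= y / x).
Proof.
  unfold Rdiv. repeat split; intros.
  - assert (0 < / x) by (apply Rinv_0_lt_compat; lra). nra.
  - assert (0 < / x) by (apply Rinv_0_lt_compat; lra). nra.
  - assert (/ x < 0) by (apply Rinv_lt_0_compat; lra). nra.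
  - assert (/ x < 0) by (apply Rinv_lt_0_compat; lra). nra.
Qed.

Lemma Carg_props (w : C) : Rabs (Carg w) <= PI /\ (0 <= snd w -> 0 <= Carg w)
  /\ (snd w < 0 -> Carg w <= 0).
Proof.
  destruct w as [x y]. unfold Carg; simpl.
  pose proof PI_RGT_0.
  destruct (div_sign x y) as (d1 & d2 & d3 & d4).
  destruct (atan_bound (y / x)).
  destruct (Rlt_dec 0 x); [|destruct (Rlt_dec x 0); [destruct (Rle_dec 0 y)|]].
  - repeat split; [apply Rabs_le; lra| intros; apply atan_nonneg; auto |
      intros; apply atan_nonpos; apply d2; lra].
  - assert (atan (y / x) <= 0) by (apply atan_nonpos; auto).
    repeat split; [apply Rabs_le; lra| intros; lra | intros; lra].
  - assert (0 <= atan (y / x)) by (apply atan_nonneg; apply d4; lra).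
    repeat split; [apply Rabs_le; lra| intros; lra | intros; lra].
  - destruct (Rlt_dec 0 y); [|destruct (Rlt_dec y 0)];
    repeat split; try (apply Rabs_le; lra); intros; lra.
Qed.

Lemma per_w (w : C) (Cst : R) (m : nat) : (1 <= m)%nat -> 0 < Cst < 1 -> Cmod w <= Cst ->
  INR m * atan (PI / Rabs (ln Cst)) <= PI / 2 ->
  0 <= (-1) ^ m * Re (Cpown (Clog w) m) /\
  (0 <= snd w -> (-1) ^ m * Im (Cpown (Clog w) m) <= 0) /\
  (snd w < 0 -> 0 <= (-1) ^ m * Im (Cpown (Clog w) m)).
Proof.
  intros hm hC hw ht.
  assert (hl : ln Cst < 0) by (rewrite <- ln_1; apply ln_increasing; lra).
  rewrite Rabs_left in ht by exact hl.
  destruct (Req_dec (Cmod w) 0) as [h0|h0].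
  - apply Cmod_eq_0 in h0. subst w.
    assert (E : Clog 0 = (0, 0)).
    { unfold Clog. rewrite Cmod_0. unfold Carg. simpl.
      f_equal.
      - unfold ln. destruct Rlt_dec as [h|h]; [exfalso; apply (Rlt_irrefl 0); exact h|reflexivity].
      - repeat (destruct Rlt_dec as [h|h]; [exfalso; apply (Rlt_irrefl 0); exact h|]). reflexivity. }
    rewrite E. destruct m as [|k]; [lia|]. simpl. unfold Cmult; simpl.
    repeat split; intros; lra.
  - pose proof (Cmod_ge_0 w).
    assert (hL : ln (Cmod w) <= - - ln Cst).
    { rewrite Ropp_involutive. apply ln_le; lra. }
    destruct (Carg_props w) as (c1 & c2 & c3).
    destruct (key (ln (Cmod w)) (Carg w) (- ln Cst) m) as (k1 & k2 & k3); try lra.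
    unfold Clog, Re, Im. repeat split; auto.
Qed.

Theorem lemmaB1 (z : Complex.C) (b Cst : R) (m : nat)
  (hb0 : 0 < b) (hb1 : b < 1) (hC1 : Cst < 1)
  (hbound : forall t : R, b <= t <= 1 ->
     Cmod (Cminus (RtoC 1) (Cmult (RtoC t) z)) <= Cst)
  (hm : (1 <= m)%nat)
  (htheta : INR m * atan (PI / Rabs (ln Cst)) <= PI / 2) :
  ((forall t : R, b <= t <= 1 ->
      0 <= Re (Cpown (Clog (Cminus (RtoC 1) (Cmult (RtoC t) z))) m)) \/
   (forall t : R, b <= t <= 1 ->
      Re (Cpown (Clog (Cminus (RtoC 1) (Cmult (RtoC t) z))) m) <= 0)) /\
  ((forall t : R, b <= t <= 1 ->
      0 <= Im (Cpown (Clog (Cminus (RtoC 1) (Cmult (RtoC t) z))) m)) \/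
   (forall t : R, b <= t <= 1 ->
      Im (Cpown (Clog (Cminus (RtoC 1) (Cmult (RtoC t) z))) m) <= 0)).
Proof.
  assert (hC0 : 0 < Cst).
  { destruct (Rlt_dec 0 Cst) as [h|h]; [exact h|]. exfalso.
    assert (e1 : Cmod (Cminus (RtoC 1) (Cmult (RtoC b) z)) = 0).
    { pose proof (hbound b ltac:(lra)). pose proof (Cmod_ge_0 (Cminus (RtoC 1) (Cmult (RtoC b) z))). lra. }
    assert (e2 : Cmod (Cminus (RtoC 1) (Cmult (RtoC 1) z)) = 0).
    { pose proof (hbound 1 ltac:(lra)). pose proof (Cmod_ge_0 (Cminus (RtoC 1) (Cmult (RtoC 1) z))). lra. }
    apply Cmod_eq_0 in e1. apply Cmod_eq_0 in e2.
    destruct z as [x y]. apply (f_equal fst) in e1. apply (f_equal fst) in e2.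
    unfold Cminus, Cplus, Copp, Cmult, RtoC in e1, e2; simpl in e1, e2. nra. }
  set (s := (-1) ^ m).
  assert (hs : s = 1 \/ s = -1).
  { unfold s. destruct (Nat.Even_or_Odd m) as [[k ->]|[k ->]].
    - left; apply pow_1_even.
    - right. rewrite Nat.add_1_r. apply pow_1_odd. }
  assert (P : forall t, b <= t <= 1 ->
    0 <= s * Re (Cpown (Clog (Cminus (RtoC 1) (Cmult (RtoC t) z))) m) /\
    (0 <= - t * snd z -> s * Im (Cpown (Clog (Cminus (RtoC 1) (Cmult (RtoC t) z))) m) <= 0) /\
    (- t * snd z < 0 -> 0 <= s * Im (Cpown (Clog (Cminus (RtoC 1) (Cmult (RtoC t) z))) m))).
  { intros t ht.
    assert (E : snd (Cminus (RtoC 1) (Cmult (RtoC t) z)) = - t * snd z).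
    { destruct z; unfold Cminus, Cplus, Copp, Cmult, RtoC; simpl; ring. }
    rewrite <- E. exact (per_w _ Cst m hm (conj hC0 hC1) (hbound t ht) htheta). }
  split.
  - destruct hs as [hs|hs]; [left|right]; intros t ht; destruct (P t ht) as (p1 & _); 
      rewrite hs in p1; lra.
  - destruct (Rle_dec (snd z) 0) as [hz|hz].
    + assert (Q : forall t, b <= t <= 1 ->
        s * Im (Cpown (Clog (Cminus (RtoC 1) (Cmult (RtoC t) z))) m) <= 0).
      { intros t ht. destruct (P t ht) as (_ & p2 & _). apply p2. nra. }
      destruct hs as [hs|hs]; [right|left]; intros t ht; specialize (Q t ht);
        rewrite hs in Q; lra.
    + assert (Q : forall t, b <= t <= 1 ->
        0 <= s * Im (Cpown (Clog (Cminus (RtoC 1) (Cmult (RtoC t) z))) m)).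
      { intros t ht. destruct (P t ht) as (_ & _ & p3). apply p3. nra. }
      destruct hs as [hs|hs]; [left|right]; intros t ht; specialize (Q t ht);
        rewrite hs in Q; lra.
Qed.
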